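(* Let $q>0$. The following statements are equivalent: (i) the weight $w_q$ is unique; (ii) $w_q(\mathbf m)=1$ for every proper loop $\mathbf m$ for $q$; (iii) $w_q(\mathbf m)=w_q(\mathbf n)$ for all non-trivial proper loops $\mathbf m,\mathbf n$ for $q$.
   Context: Let $q>0$. For $k\ge0$ and $\mathbf m=(m_0,\dots,m_k)\in\mathbb Z^{k+1}$ put $\mathbf m_j=(m_0,\dots,m_j)$; define $c(q,\mathbf m_0)=m_0$ and $c(q,\mathbf m_j)=m_j+\frac{1}{q\,c(q,\mathbf m_{j-1})}$ for $1\le j\le k$. $\mathbf m$ is a path for $q$ of length $k$ if $c(q,\mathbf m_j)\ne0$ for $0\le j\le k-1$; it is proper if $m_j\ne0$ for $0\le j\le k-1$. The weight of a path is $w_q(\mathbf m)=q^{k/2}\prod_{j=0}^{k-1}|c(q,\mathbf m_j)|$ (and $1$ if $k=0$). A loop is a path with $c(q,\mathbf m)=0$; the trivial loop is $(0)$. The weight $w_q$ is unique if $w_q(\mathbf m)=w_q(\mathbf n)$ for all paths $\mathbf m,\mathbf n$ for $q$ with $c(q,\mathbf m)=c(q,\mathbf n)$. *)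

(* Defs.v *)
From Stdlib Require Import Reals ZArith List.
Open Scope R_scope.

(* A sequence m = (m_0, ..., m_k) in Z^{k+1} is represented by a nonempty
   list of integers; its length k is (length m - 1). *)
Definition len (m : list Z) : nat := (length m - 1)%nat.

Fixpoint cf (q : R) (m : list Z) (j : nat) : R :=
  match j with
  | O => IZR (nth 0 m 0%Z)
  | S j' => IZR (nth j m 0%Z) + / (q * cf q m j')
  end.

Definition cval (q : R) (m : list Z) : R := cf q m (len m).

Definition is_path (q : R) (m : list Z) : Prop :=
  m <> nil /\ forall j, (j < len m)%nat -> cf q m j <> 0.

Definition proper (m : list Z) : Prop :=
  forall j, (j < len m)%nat -> nth j m 0%Z <> 0%Z.

Fixpoint cprod (q : R) (m : list Z) (n : nat) : R :=
  match n with
  | O => 1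
  | S n' => cprod q m n' * Rabs (cf q m n')
  end.

Definition weight (q : R) (m : list Z) : R :=
  sqrt q ^ len m * cprod q m (len m).

Definition is_loop (q : R) (m : list Z) : Prop :=
  is_path q m /\ cval q m = 0.

Definition trivial_loop : list Z := (0%Z :: nil).

Definition unique_weight (q : R) : Prop :=
  forall m n, is_path q m -> is_path q n -> cval q m = cval q n ->
    weight q m = weight q n.

(* Main.v *)
Require Import Defs.
From Stdlib Require Import Reals ZArith List Lra Lia Classical.
Open Scope R_scope.

Fixpoint cfF (q : R) (f : nat -> Z) (j : nat) : R :=
  match j with
  | O => IZR (f 0%nat)
  | S j' => IZR (f j) + / (q * cfF q f j')
  end.

Fixpoint cprodF (q : R) (f : nat -> Z) (n : nat) : R :=
  match n with
  | O => 1
  | S n' => cprodF q f n' * Rabs (cfF q f n')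
  end.

Definition weightF q f K := sqrt q ^ K * cprodF q f K.
Definition pathF q f K := forall j, (j < K)%nat -> cfF q f j <> 0.
Definition loopF q f K := pathF q f K /\ cfF q f K = 0.
Definition properF (f : nat -> Z) K := forall j, (j < K)%nat -> f j <> 0%Z.

Definition nthf (m : list Z) (i : nat) : Z := nth i m 0%Z.
Definition mk (f : nat -> Z) (K : nat) : list Z := map f (seq 0 (S K)).

Lemma cf_cfF q m j : cf q m j = cfF q (nthf m) j.
Proof. induction j as [|j IH]; simpl; [reflexivity|rewrite IH; reflexivity]. Qed.

Lemma cprod_cprodF q m j : cprod q m j = cprodF q (nthf m) j.
Proof. induction j as [|j IH]; simpl; [reflexivity|rewrite IH, cf_cfF; try reflexivity]. Qed.

Lemma cfF_ext q f g j : (forall i, (i <= j)%nat -> f i = g i) ->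
  cfF q f j = cfF q g j.
Proof.
  induction j as [|j IH]; intros H; simpl.
  - rewrite H; auto.
  - rewrite (H (S j)) by lia. rewrite IH; [reflexivity|intros; apply H; lia].
Qed.

Lemma cprodF_ext q f g j : (forall i, (i < j)%nat -> cfF q f i = cfF q g i) ->
  cprodF q f j = cprodF q g j.
Proof.
  induction j as [|j IH]; intros H; simpl; auto.
  rewrite IH, H; [reflexivity|lia|intros; apply H; lia].
Qed.

Lemma cprodF_pos q f j : (forall i, (i < j)%nat -> cfF q f i <> 0) -> 0 < cprodF q f j.
Proof.
  induction j as [|j IH]; intros H; simpl. lra.
  apply Rmult_lt_0_compat. apply IH; intros; apply H; lia.
  apply Rabs_pos_lt, H; lia.
Qed.

Lemma weightF_pos q f K : 0 < q -> pathF q f K -> 0 < weightF q f K.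
Proof.
  intros hq Hp. unfold weightF. apply Rmult_lt_0_compat.
  apply pow_lt, sqrt_lt_R0; auto. apply cprodF_pos; auto.
Qed.

Lemma invinv q c : 0 < q -> c <> 0 -> / (q * / (q * c)) = c.
Proof. intros. field. lra. Qed.

Lemma mk_nth f K i : (i <= K)%nat -> nth i (mk f K) 0%Z = f i.
Proof.
  intros H. unfold mk.
  rewrite nth_indep with (d' := f 0%nat) by (rewrite length_map, length_seq; lia).
  rewrite map_nth, seq_nth by lia. reflexivity.
Qed.

Lemma mk_len f K : len (mk f K) = K.
Proof. unfold len, mk. rewrite length_map, length_seq. lia. Qed.

Lemma mk_cf q f K j : (j <= K)%nat -> cf q (mk f K) j = cfF q f j.
Proof. intros. rewrite cf_cfF. apply cfF_ext. intros; unfold nthf; apply mk_nth; lia. Qed.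

Lemma mk_loop q f K : loopF q f K -> is_loop q (mk f K).
Proof.
  intros [Hp Hc]. split; [split|].
  - unfold mk. simpl. discriminate.
  - intros j Hj. rewrite mk_len in Hj. rewrite mk_cf by lia. auto.
  - unfold cval. rewrite mk_len, mk_cf by lia. auto.
Qed.

Lemma mk_proper f K : properF f K -> proper (mk f K).
Proof. intros H j Hj. rewrite mk_len in Hj. rewrite mk_nth by lia. auto. Qed.

Lemma mk_weight q f K : weight q (mk f K) = weightF q f K.
Proof.
  unfold weight, weightF. rewrite mk_len, cprod_cprodF. f_equal.
  apply cprodF_ext. intros. rewrite <- cf_cfF. apply mk_cf. lia.
Qed.

Lemma path_F q m : is_path q m -> pathF q (nthf m) (len m).
Proof. intros [_ H] j Hj. rewrite <- cf_cfF. auto. Qed.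

Lemma loop_F q m : is_loop q m -> loopF q (nthf m) (len m).
Proof. intros [H Hc]. split. apply path_F; auto. unfold cval in Hc. rewrite <- cf_cfF. auto. Qed.

Lemma weight_F q m : weight q m = weightF q (nthf m) (len m).
Proof. unfold weight, weightF. rewrite cprod_cprodF. auto. Qed.

Lemma red_step q (hq : 0 < q) f K p : loopF q f K -> f (S p) = 0%Z -> (S (S p) <= K)%nat ->
  exists g, loopF q g (K - 2) /\ weightF q g (K - 2) = weightF q f K.
Proof.
  intros [Hp Hc] Hz HK.
  set (g := fun i => if (i <? p)%nat then f i else if (i =? p)%nat then (f p + f (S (S p)))%Z
                     else f (S (S i))).
  assert (A : forall i, (i < p)%nat -> cfF q g i = cfF q f i).
  { intros i Hi. apply cfF_ext. intros i' Hi'. unfold g.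
    destruct (Nat.ltb_spec i' p); [auto|lia]. }
  assert (Hcp : cfF q f p <> 0) by (apply Hp; lia).
  assert (B : forall t, cfF q g (p + t) = cfF q f (S (S (p + t)))).
  { induction t as [|t IH].
    - rewrite Nat.add_0_r. destruct p as [|r].
      + simpl. unfold g. simpl. simpl in Hcp. rewrite Hz, plus_IZR. simpl. rewrite Rplus_0_l, invinv by auto. lra.
      + change (cfF q g (S r)) with (IZR (g (S r)) + / (q * cfF q g r)).
        change (cfF q f (S (S (S r)))) with
          (IZR (f (S (S (S r)))) + / (q * (IZR (f (S (S r))) + / (q * cfF q f (S r))))).
        rewrite Hz, Rplus_0_l, invinv by auto. rewrite A by lia.
        unfold g. rewrite Nat.ltb_irrefl, Nat.eqb_refl, plus_IZR. simpl. lra.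
    - rewrite Nat.add_succ_r. simpl (cfF q g (S (p + t))). rewrite IH.
      unfold g at 1. destruct (Nat.ltb_spec (S (p+t)) p); [lia|].
      destruct (Nat.eqb_spec (S (p+t)) p); [lia|]. reflexivity. }
  assert (C : forall t, cprodF q f (S (S (p + t))) = cprodF q g (p + t) / q).
  { induction t as [|t IH].
    - rewrite Nat.add_0_r. simpl (cprodF q f (S (S p))).
      change (cfF q f (S p)) with (IZR (f (S p)) + / (q * cfF q f p)).
      rewrite Hz, Rplus_0_l.
      rewrite (cprodF_ext q g f p) by (intros; apply A; auto).
      rewrite Rmult_assoc, <- Rabs_mult.
      replace (cfF q f p * / (q * cfF q f p)) with (/ q) by (field; lra).
      rewrite Rabs_right. unfold Rdiv. reflexivity.
      left. apply Rinv_0_lt_compat; auto.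
    - rewrite Nat.add_succ_r.
      change (cprodF q f (S (S (S (p+t))))) with (cprodF q f (S (S (p+t))) * Rabs (cfF q f (S (S (p+t))))).
      change (cprodF q g (S (p+t))) with (cprodF q g (p+t) * Rabs (cfF q g (p+t))).
      rewrite IH, B. unfold Rdiv. ring. }
  exists g. destruct (Nat.le_exists_sub (S (S p)) K HK) as [t [Ht _]].
  assert (EK : (K - 2 = p + t)%nat) by lia. rewrite EK.
  assert (EK' : K = S (S (p + t))) by lia.
  split; [split|].
  - intros i Hi. destruct (Nat.ltb_spec i p).
    + rewrite A by auto. apply Hp. lia.
    + replace i with (p + (i - p))%nat by lia. rewrite B. apply Hp. lia.
  - rewrite B, <- EK'. auto.
  - unfold weightF. rewrite EK', C. simpl.
    assert (Hsq : sqrt q * sqrt q = q) by (apply sqrt_sqrt; lra).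
    assert (Hs0 : sqrt q <> 0) by (apply Rgt_not_eq, sqrt_lt_R0; lra).
    unfold Rdiv. replace (/ q) with (/ (sqrt q * sqrt q)) by (rewrite Hsq; reflexivity).
    field. auto.
Qed.

Lemma reduce q (hq : 0 < q) : forall N K f, (K <= N)%nat -> loopF q f K ->
  exists g K', loopF q g K' /\ properF g K' /\ weightF q g K' = weightF q f K.
Proof.
  induction N as [|N IH]; intros K f HK Hl.
  - exists f, K. split; auto. split; auto. intros j Hj; lia.
  - destruct (classic (properF f K)) as [Hpr|Hnp].
    + exists f, K; auto.
    + assert (Hex : exists j, (j < K)%nat /\ f j = 0%Z).
      { apply NNPP; intro H'. apply Hnp. intros j Hj Hf. apply H'; eauto. }
      destruct Hex as [[|p] [Hj Hf]].
      * exfalso. destruct Hl as [Hp _]. apply (Hp 0%nat Hj). simpl. rewrite Hf. reflexivity.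
      * destruct (red_step q hq f K p Hl Hf) as [g [Hg Hw]]; [lia|].
        destruct (IH (K - 2)%nat g) as [g' [K' [H1 [H2 H3]]]]; [lia|auto|].
        exists g', K'. split; auto. split; auto. congruence.
Qed.

Lemma inv_step q (hq : 0 < q) f k h l : pathF q f k -> pathF q h l ->
  cfF q f k = cfF q h l ->
  exists g, loopF q g (k + l) /\ weightF q g (k + l) * weightF q h l = weightF q f k.
Proof.
  intros Hf Hh Hx.
  set (g := fun i => if (i <? k)%nat then f i else if (i =? k)%nat then (f k - h l)%Z
                     else (- h (k + l - i)%nat)%Z).
  assert (A : forall i, (i < k)%nat -> cfF q g i = cfF q f i).
  { intros i Hi. apply cfF_ext. intros i' Hi'. unfold g.
    destruct (Nat.ltb_spec i' k); [auto|lia]. }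
  assert (Hv : forall u, (u < l)%nat ->
             cfF q h (S u) - IZR (h (S u)) = / (q * cfF q h u)).
  { intros u Hu. simpl. ring. }
  assert (B : forall t, (t <= l)%nat -> cfF q g (k + t) = cfF q h (l - t)%nat - IZR (h (l - t)%nat)).
  { induction t as [|t IH]; intros Ht.
    - rewrite Nat.add_0_r, Nat.sub_0_r, <- Hx. destruct k as [|r].
      + simpl. unfold g. simpl. rewrite minus_IZR. reflexivity.
      + change (cfF q g (S r)) with (IZR (g (S r)) + / (q * cfF q g r)).
        rewrite A by lia. unfold g. rewrite Nat.ltb_irrefl, Nat.eqb_refl, minus_IZR.
        simpl. ring.
    - rewrite Nat.add_succ_r. simpl (cfF q g (S (k + t))). rewrite IH by lia.
      replace (l - t)%nat with (S (l - S t)) by lia.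
      rewrite Hv by lia. rewrite invinv by (auto; apply Hh; lia).
      unfold g. destruct (Nat.ltb_spec (S (k+t)) k); [lia|].
      destruct (Nat.eqb_spec (S (k+t)) k); [lia|].
      replace (k + l - S (k + t))%nat with (l - S t)%nat by lia.
      rewrite opp_IZR. ring. }
  assert (C : forall t, (t <= l)%nat ->
            cprodF q g (k + t) * cprodF q h l = cprodF q f k * cprodF q h (l - t)%nat * / q ^ t).
  { induction t as [|t IH]; intros Ht.
    - rewrite Nat.add_0_r, Nat.sub_0_r. simpl.
      rewrite (cprodF_ext q g f k) by (intros; apply A; auto). field.
    - rewrite Nat.add_succ_r. simpl (cprodF q g (S (k + t))).
      set (u := (l - S t)%nat).
      assert (Eu : (l - t = S u)%nat) by (unfold u; lia).
      rewrite B by lia. rewrite Eu, Hv by lia.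
      assert (Hcu : cfF q h u <> 0) by (apply Hh; lia).
      assert (Habs : Rabs (cfF q h u) * Rabs (/ (q * cfF q h u)) = / q).
      { rewrite <- Rabs_mult. replace (cfF q h u * / (q * cfF q h u)) with (/ q) by (field; lra).
        apply Rabs_right. left. apply Rinv_0_lt_compat; auto. }
      transitivity (cprodF q g (k + t) * cprodF q h l * Rabs (/ (q * cfF q h u))); [ring|].
      rewrite IH by lia. rewrite Eu. simpl (cprodF q h (S u)).
      transitivity (cprodF q f k * cprodF q h u * / q ^ t *
                    (Rabs (cfF q h u) * Rabs (/ (q * cfF q h u)))); [ring|].
      rewrite Habs. simpl. field. split; [apply pow_nonzero|]; lra. }
  exists g. split; [split|].
  - intros i Hi. destruct (Nat.ltb_spec i k).
    + rewrite A by auto. apply Hf. auto.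
    + replace i with (k + (i - k))%nat by lia. rewrite B by lia.
      replace (l - (i - k))%nat with (S (l - S (i - k))) by lia.
      rewrite Hv by lia. apply Rinv_neq_0_compat. apply Rmult_integral_contrapositive.
      split; [lra|apply Hh; lia].
  - rewrite B by lia. rewrite Nat.sub_diag. simpl. ring.
  - unfold weightF.
    transitivity (sqrt q ^ k * (sqrt q ^ l * sqrt q ^ l) * (cprodF q g (k + l) * cprodF q h l)).
    { rewrite pow_add. ring. }
    rewrite C by lia. rewrite Nat.sub_diag.
    rewrite <- Rpow_mult_distr, sqrt_sqrt by lra. simpl. field. apply pow_nonzero. lra.
Qed.

Lemma cat_step q (hq : 0 < q) f K s : loopF q f K -> properF f K -> (0 < K)%nat ->
  (s = 1 \/ s = -1)%Z -> (f K + s * f 0%nat <> 0)%Z ->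
  exists g, loopF q g (K + K) /\ properF g (K + K) /\
            weightF q g (K + K) = weightF q f K * weightF q f K.
Proof.
  intros [Hp Hc] Hpr HK Hs Hne.
  set (g := fun i => if (i <? K)%nat then f i else if (i =? K)%nat then (f K + s * f 0%nat)%Z
                     else (s * f (i - K)%nat)%Z).
  assert (A : forall i, (i < K)%nat -> cfF q g i = cfF q f i).
  { intros i Hi. apply cfF_ext. intros i' Hi'. unfold g.
    destruct (Nat.ltb_spec i' K); [auto|lia]. }
  assert (Hsinv : forall c, / (q * (IZR s * c)) = IZR s * / (q * c)).
  { intros c. destruct Hs as [-> | ->]; simpl.
    - rewrite !Rmult_1_l. reflexivity.
    - replace (q * (-1 * c)) with (- (q * c)) by ring. rewrite Rinv_opp. ring. }
  assert (B : forall t, cfF q g (K + t) = IZR s * cfF q f t).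
  { induction t as [|t IH].
    - rewrite Nat.add_0_r. destruct K as [|r]; [lia|].
      change (cfF q g (S r)) with (IZR (g (S r)) + / (q * cfF q g r)).
      rewrite A by lia. unfold g. rewrite Nat.ltb_irrefl, Nat.eqb_refl, plus_IZR, mult_IZR.
      simpl in Hc. simpl. lra.
    - rewrite Nat.add_succ_r. simpl (cfF q g (S (K + t))). rewrite IH, Hsinv.
      unfold g. destruct (Nat.ltb_spec (S (K+t)) K); [lia|].
      destruct (Nat.eqb_spec (S (K+t)) K); [lia|].
      replace (S (K + t) - K)%nat with (S t) by lia. rewrite mult_IZR. simpl. ring. }
  assert (Habs : Rabs (IZR s) = 1).
  { destruct Hs as [-> | ->]; simpl. apply Rabs_R1. rewrite Rabs_left; lra. }
  assert (C : forall t, cprodF q g (K + t) = cprodF q f K * cprodF q f t).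
  { induction t as [|t IH].
    - rewrite Nat.add_0_r. simpl. rewrite Rmult_1_r. apply cprodF_ext. auto.
    - rewrite Nat.add_succ_r. simpl. rewrite IH, B, Rabs_mult, Habs. ring. }
  assert (Hs0 : IZR s <> 0) by (destruct Hs as [-> | ->]; simpl; lra).
  exists g. split; [split|]; [| |split].
  - intros i Hi. destruct (Nat.ltb_spec i K).
    + rewrite A by auto. apply Hp. auto.
    + replace i with (K + (i - K))%nat by lia. rewrite B.
      apply Rmult_integral_contrapositive. split; auto. apply Hp. lia.
  - rewrite B, Hc. ring.
  - intros i Hi. unfold g. destruct (Nat.ltb_spec i K); [apply Hpr; auto|].
    destruct (Nat.eqb_spec i K); auto.
    assert (f (i - K)%nat <> 0%Z) by (apply Hpr; lia).
    destruct Hs as [-> | ->]; lia.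
  - unfold weightF. rewrite C, pow_add. ring.
Qed.

Lemma weight_trivial q : weight q trivial_loop = 1.
Proof. unfold weight, trivial_loop, len. simpl. lra. Qed.

Lemma trivial_is_loop q : is_loop q trivial_loop.
Proof.
  split; [split|].
  - discriminate.
  - unfold len; simpl; intros; lia.
  - unfold cval, len; simpl. reflexivity.
Qed.

Lemma nontriv_len q m : is_loop q m -> m <> trivial_loop -> (0 < len m)%nat.
Proof.
  intros [[Hn _] Hc] Ht. destruct m as [|a [|b t]]; try congruence.
  - exfalso. apply Ht. unfold cval, len in Hc; simpl in Hc.
    apply eq_IZR in Hc. subst; reflexivity.
  - unfold len; simpl; lia.
Qed.

Theorem lemma4 (q : R) (hq : 0 < q) :
  (unique_weight q <->
     (forall m, is_loop q m -> proper m -> weight q m = 1)) /\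
  ((forall m, is_loop q m -> proper m -> weight q m = 1) <->
     (forall m n, is_loop q m -> proper m -> m <> trivial_loop ->
                  is_loop q n -> proper n -> n <> trivial_loop ->
                  weight q m = weight q n)).
Proof.
  split; split.
  - intros HU m Hl Hp. rewrite <- (weight_trivial q).
    destruct Hl as [Hpm Hc]. destruct (trivial_is_loop q) as [Hpt Hct].
    apply HU; auto.
  - intros H2 m n Hm Hn Hc.
    unfold cval in Hc. rewrite !cf_cfF in Hc.
    destruct (inv_step q hq (nthf m) (len m) (nthf n) (len n)) as [g [Hg Hw]];
      try apply path_F; auto.
    destruct (reduce q hq (len m + len n) (len m + len n) g) as [g' [K' [H1 [H3 H4]]]]; auto.
    assert (E : weightF q g' K' = 1).
    { rewrite <- mk_weight. apply H2. apply mk_loop; auto. apply mk_proper; auto. }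
    rewrite !weight_F, <- Hw, <- H4, E. ring.
  - intros H2 m n Hm Hpm _ Hn Hpn _. rewrite (H2 m Hm Hpm), (H2 n Hn Hpn); auto.
  - intros H3 m Hl Hp.
    destruct (list_eq_dec Z.eq_dec m trivial_loop) as [->|Hnt]; [apply weight_trivial|].
    pose proof (nontriv_len q m Hl Hnt) as HK.
    set (f := nthf m). set (K := len m).
    assert (Hf0 : f 0%nat <> 0%Z) by (apply Hp; auto).
    assert (Hw : exists g, loopF q g (K + K) /\ properF g (K + K) /\
            weightF q g (K + K) = weightF q f K * weightF q f K).
    { destruct (Z.eq_dec (f K + f 0%nat) 0) as [E|E].
      - apply (cat_step q hq f K (-1)%Z); auto. apply loop_F; auto. lia.
      - apply (cat_step q hq f K 1%Z); auto. apply loop_F; auto. lia. }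
    destruct Hw as [g [Hg [Hgp Hgw]]].
    assert (Hne : mk g (K + K) <> trivial_loop).
    { intros E. assert (len (mk g (K + K)) = len trivial_loop) by (rewrite E; auto).
      rewrite mk_len in H. unfold trivial_loop, len in H. simpl in H. unfold K in H. lia. }
    pose proof (H3 (mk g (K + K)) m (mk_loop q g _ Hg) (mk_proper g _ Hgp) Hne Hl Hp Hnt) as E.
    rewrite mk_weight, Hgw in E. rewrite weight_F in *. fold f K in E |- *.
    assert (Hpos : 0 < weightF q f K).
    { apply weightF_pos; auto. apply path_F. destruct Hl; auto. }
    nra.
Qed.
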